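(* There is no PPL-complete problem under DLOGTIME reductions; that is, there is no problem $\mathcal{P}\in$ PPL such that every problem in PPL is DLOGTIME-reducible to $\mathcal{P}$.
   Context: A random-access Turing machine (RATM) is a multitape Turing machine with a read-only input tape and work tapes, each with an associated binary index tape, and a special random-access state that in one step moves each non-index tape head to the cell addressed by its index tape. For $i\ge1$, $\mathrm{PPL}^i$ is the class of problems solvable by an RATM in time $O(\log^i n)$, where $n$ is the input length, and $\mathrm{PPL}=\bigcup_i \mathrm{PPL}^i$ (problems solvable by an RATM in $O(\mathrm{polylog}(n))$ time). A DLOGTIME reduction from $\mathcal{P}_1$ to $\mathcal{P}_2$ is a function $f$ with $x\in\mathcal{P}_1\iff f(x)\in\mathcal{P}_2$, $|f(x)|$ polynomially bounded in $|x|$, and such that, given $x$ and an index $i$, the $i$-th symbol of $f(x)$ (and the length of $f(x)$) can be computed by an RATM in time $O(\log|x|)$. *)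

(* Defs.v *)
From mathcomp Require Import all_boot.
Unset Printing Implicit Defensive.

Definition problem := seq bool -> Prop.

Inductive move := MoveL | MoveS | MoveR.
Definition mv (m : move) (p : nat) : nat :=
  match m with MoveL => p.-1 | MoveS => p | MoveR => p.+1 end.

(* Index tapes are over {0,1,blank} = option bool (None = blank). *)
Fixpoint addr_aux (acc : nat) (s : seq (option bool)) : nat :=
  match s with
  | Some b :: s' => addr_aux (acc.*2 + b) s'
  | _ => acc
  end.
Definition addr (s : seq (option bool)) : nat := addr_aux 0 s.

(* Binary representation of a natural number, most significant bit first
   (0 is represented by the empty string). *)
Fixpoint bin_aux (fuel n : nat) : seq bool :=
  match fuel with
  | 0 => [::]
  | f.+1 => if n == 0 then [::] else rcons (bin_aux f n./2) (odd n)
  end.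
Definition bin (n : nat) : seq bool := bin_aux n n.

(* A random-access Turing machine: a read-only input tape over {0,1} (cells
   beyond the input read as blank = None), k work tapes over a finite alphabet
   G with blank symbol, and an index tape (over {0,1,blank}) attached to the
   input tape and to each work tape.  In a random-access state the machine,
   in one step, moves every non-index head to the cell addressed by its index
   tape and goes to state ra_next q. *)
Record RATM := {
  Q : finType;
  G : finType;
  blank : G;
  ntapes : nat;
  q0 : Q;
  halting : pred Q;
  accepting : pred Q;
  ra : pred Q;
  ra_next : Q -> Q;
  delta : Q -> option bool -> option bool ->
          ntapes.-tuple G -> ntapes.-tuple (option bool) ->
          Q * move                                  (* new state, input head move *)
            * (option bool * move)                  (* input index tape: write, move *)
            * ntapes.-tuple (G * move)              (* work tapes: write, move *)
            * ntapes.-tuple (option bool * move)    (* work index tapes: write, move *)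
}.

Record config (M : RATM) := Config {
  cstate : Q M;
  ipos : nat;
  iidx : seq (option bool);
  iidxpos : nat;
  wtape : 'I_(ntapes M) -> seq (G M);  (* work tapes (blank beyond the end) *)
  wpos : 'I_(ntapes M) -> nat;
  widx : 'I_(ntapes M) -> seq (option bool);
  widxpos : 'I_(ntapes M) -> nat
}.
Arguments Config {M}.
Arguments cstate {M}. Arguments ipos {M}. Arguments iidx {M}. Arguments iidxpos {M}.
Arguments wtape {M}. Arguments wpos {M}. Arguments widx {M}. Arguments widxpos {M}.

Definition read_input (x : seq bool) (p : nat) : option bool :=
  if p < size x then Some (nth false x p) else None.

Definition step (M : RATM) (x : seq bool) (c : config M) : config M :=
  let q := cstate c in
  if halting M q then c
  else if ra M q then
    Config (ra_next M q) (addr (iidx c)) (iidx c) (iidxpos c)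
      (wtape c) (fun j => addr (widx c j)) (widx c) (widxpos c)
  else
    let: (q', im, (iw, iim), wout, wiout) :=
      delta M q (read_input x (ipos c)) (nth None (iidx c) (iidxpos c))
        [tuple nth (blank M) (wtape c j) (wpos c j) | j < ntapes M]
        [tuple nth None (widx c j) (widxpos c j) | j < ntapes M] in
    Config q' (mv im (ipos c))
      (set_nth None (iidx c) (iidxpos c) iw) (mv iim (iidxpos c))
      (fun j => set_nth (blank M) (wtape c j) (wpos c j) (tnth wout j).1)
      (fun j => mv (tnth wout j).2 (wpos c j))
      (fun j => set_nth None (widx c j) (widxpos c j) (tnth wiout j).1)
      (fun j => mv (tnth wiout j).2 (widxpos c j)).

(* Initial configuration; [w] is the initial content of the input index tape
   (empty for ordinary decision; the binary query index for reductions). *)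
Definition init (M : RATM) (w : seq (option bool)) : config M :=
  Config (q0 M) 0 w 0 (fun _ => [::]) (fun _ => 0) (fun _ => [::]) (fun _ => 0).

(* After t steps from the initial configuration on x (with initial input index
   tape w), M has halted, and it accepts iff [ans] holds.  (Halting
   configurations are fixed by [step], so this means "halts within t steps"). *)
Definition halts_with (M : RATM) (x : seq bool) (w : seq (option bool))
    (t : nat) (ans : Prop) : Prop :=
  let c := iter t (step M x) (init M w) in
  halting M (cstate c) /\ (accepting M (cstate c) <-> ans).

(* log n, made positive: floor(log2 n) + 1. *)
Definition logp (n : nat) : nat := (trunc_log 2 n).+1.

Definition PPLi (i : nat) (P : problem) : Prop :=
  exists (M : RATM) (c : nat),
    forall x : seq bool, halts_with M x [::] (c * logp (size x) ^ i) (P x).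

Definition PPL (P : problem) : Prop := exists i, 1 <= i /\ PPLi i P.

(* DLOGTIME reductions: f preserves membership, |f(x)| is polynomially
   bounded, and there are RATMs running in time O(log |x|) which, given x on
   the input tape and an index i <= |f(x)| in binary on the input index tape,
   decide respectively whether "i < |f(x)| and the i-th symbol of f(x) is 1"
   and whether "i < |f(x)|" (the latter determines the length of f(x)). *)
Definition DLOGTIME_reduction (P1 P2 : problem) (f : seq bool -> seq bool) : Prop :=
  (forall x, P1 x <-> P2 (f x)) /\
  (exists c d : nat, forall x, size (f x) <= c * size x ^ d + c) /\
  (exists (Mbit Mlen : RATM) (c : nat), forall x i, i <= size (f x) ->
      halts_with Mbit x (map Some (bin i)) (c * logp (size x))
        (i < size (f x) /\ nth false (f x) i = true) /\
      halts_with Mlen x (map Some (bin i)) (c * logp (size x))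
        (i < size (f x))).

Definition DLOGTIME_reducible (P1 P2 : problem) : Prop :=
  exists f, DLOGTIME_reduction P1 P2 f.

(* Main.v *)
Require Import Defs.
From mathcomp Require Import all_boot.
From mathcomp Require Import zify.

Lemma step_ext (M : RATM) x y (c : config M) :
  read_input x (ipos c) = read_input y (ipos c) -> step M x c = step M y c.
Proof. by move=> H; rewrite /step H. Qed.

Definition reads (M : RATM) x w t :=
  [seq ipos (iter s (step M x) (init M w)) | s <- iota 0 t].

Lemma size_reads M x w t : size (reads M x w t) = t.
Proof. by rewrite size_map size_iota. Qed.

Lemma sim (M : RATM) x y w t :
  (forall p, p \in reads M x w t -> read_input x p = read_input y p) ->
  iter t (step M x) (init M w) = iter t (step M y) (init M w).
Proof.
elim: t => [|t IH] H //=.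
have -> : iter t (step M y) (init M w) = iter t (step M x) (init M w).
  rewrite IH // => p Hp; apply: H.
  by move: Hp; rewrite /reads -addn1 iotaD map_cat mem_cat => ->.
apply: step_ext; apply: H.
by rewrite /reads -addn1 iotaD map_cat mem_cat /= mem_seq1 eqxx orbT.
Qed.

Lemma halted_fix (M : RATM) x c m : halting M (cstate c) -> iter m (step M x) c = c.
Proof. by move=> H; elim: m => //= m ->; rewrite /step H. Qed.

Definition flip (x : seq bool) j := set_nth false x j (~~ nth false x j).

Lemma size_flip x j : j < size x -> size (flip x j) = size x.
Proof. by move=> H; rewrite /flip size_set_nth; apply/maxn_idPr. Qed.

Lemma read_flip x j p : j < size x -> p != j -> read_input (flip x j) p = read_input x p.
Proof.
move=> Hj Hp; rewrite /read_input size_flip // /flip nth_set_nth /=.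
by rewrite (negbTE Hp).
Qed.

Lemma avoid (B : seq nat) lo m : size B < m -> exists j, lo <= j < lo + m /\ j \notin B.
Proof.
move=> Hm.
have : ~~ all (fun j => j \in B) (iota lo m).
  apply/negP => /allP Hsub.
  have := uniq_leq_size (iota_uniq lo m) Hsub.
  by rewrite size_iota leqNgt Hm.
case/allPn => j; rewrite mem_iota => Hj HB; by exists j.
Qed.

Lemma exp_dom d C : exists u, C < u /\ C * u ^ d < 2 ^ u.
Proof.
set w := (C * (d.+1) ^ d).+1.
exists (d.+1 * w); split.
  have : C < w by rewrite /w ltnS leq_pmulr // expn_gt0.
  move=> H; apply: (leq_trans H); exact: leq_pmull.
rewrite expnMn (mulnC d.+1) expnM.
have H1 : w ^ d.+1 < (2 ^ w) ^ d.+1 by rewrite ltn_exp2r // ltn_expl.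
apply: leq_trans H1.
by rewrite ltnS expnS mulnA leq_mul2r /w leqnSn orbT.
Qed.

Lemma expn_mono m n k : m <= n -> m ^ k <= n ^ k.
Proof. by case: k => [//|k] H; rewrite leq_exp2r. Qed.

Section Mach.
Variable K : nat.

Definition QK : finType := ('I_3 + (bool * bool * {ffun 'I_K -> bool}))%type.
Definition o0 : 'I_3 := @Ordinal 3 0 isT.
Definition o1 : 'I_3 := @Ordinal 3 1 isT.
Definition o2 : 'I_3 := @Ordinal 3 2 isT.

Definition haltK (q : QK) : bool := if q is inr (dn, _, _) then dn else false.
Definition accK (q : QK) : bool := if q is inr (_, p, _) then p else false.
Definition raK (q : QK) : bool := q == inl o1.

Definition zK (dirs : {ffun 'I_K -> bool}) (wis : K.-tuple (option bool)) (j : 'I_K) : bool :=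
  if dirs j then tnth wis j == None else tnth wis j == Some true.

Definition jsK dirs wis := find (fun j => ~~ zK dirs wis j) (enum 'I_K).

Definition deltaK (q : QK) (r ir : option bool) (ws : K.-tuple unit)
  (wis : K.-tuple (option bool)) :
  QK * move * (option bool * move) * K.-tuple (unit * move) * K.-tuple (option bool * move) :=
  let wt := [tuple (tt, MoveS) | j < K] in
  match q with
  | inl o =>
    if val o == 0 then (inl o1, MoveS, (Some true, MoveR), wt, [tuple (Some true, MoveR) | j < K])
    else if r is Some _ then
      (inl o1, MoveS, (Some false, MoveR), wt, [tuple (Some false, MoveR) | j < K])
    else (inr (false, false, [ffun _ => false]), MoveS, (ir, MoveS), wt,
          [tuple (tnth wis j, MoveS) | j < K])
  | inr (dn, par, dirs) =>
    let js := jsK dirs wis in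
    (inr (js == K, par (+) odflt false r, [ffun j : 'I_K => if j < js then ~~ dirs j else dirs j]),
     MoveL, (ir, MoveS), wt,
     [tuple (tnth wis j, if j == js :> nat then (if dirs j then MoveR else MoveL) else MoveS) | j < K])
  end.

Definition MK : RATM :=
  @Build_RATM QK unit tt K (inl o0) haltK accK raK (fun _ => inl o2) deltaK.

End Mach.
Section P1.
Variable K : nat.
Notation M := (MK K).

Definition ruler (a : nat) : seq (option bool) := Some true :: nseq a (Some false).

Lemma addr_aux_nseq acc a : addr_aux acc (nseq a (Some false)) = acc * 2 ^ a.
Proof.
elim: a acc => [|a IH] acc /=; first by rewrite muln1.
by rewrite IH /= addn0 -muln2 expnS mulnCA mulnA [acc * 2]mulnC.
Qed.

Lemma addr_ruler a : addr (ruler a) = 2 ^ a.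
Proof. by rewrite /addr /ruler /= addr_aux_nseq mul1n. Qed.

Definition Inv1 a (c : config M) :=
  cstate c = inl o2 /\ ipos c = 2 ^ a /\ iidx c = ruler a /\ iidxpos c = a.+1 /\
      (forall j, widx c j = ruler a) /\ (forall j, widxpos c j = a.+1).

Lemma phase1_start x : Inv1 0 (iter 2 (step M x) (init M [::])).
Proof. rewrite /Inv1 /=; by repeat split; try (move=> j); rewrite ?tnth_mktuple. Qed.

Lemma rcons_ruler a : rcons (ruler a) (Some false) = ruler a.+1.
Proof. rewrite /ruler rcons_cons; congr cons; by elim: a => //= a ->. Qed.

Lemma set_nth_size (T : Type) (x0 : T) s y : set_nth x0 s (size s) y = rcons s y.
Proof. by elim: s => //= z s ->. Qed.

Lemma size_ruler a : size (ruler a) = a.+1.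
Proof. by rewrite /= size_nseq. Qed.

Lemma set_ruler a : set_nth None (ruler a) a.+1 (Some false) = ruler a.+1.
Proof. by rewrite -{1}(size_ruler a) set_nth_size rcons_ruler. Qed.

Lemma phase1_step x a c : Inv1 a c -> 2 ^ a < size x -> Inv1 a.+1 (iter 2 (step M x) c).
Proof.
case=> Hq [Hi [Hid [Hidp [Hw Hwp]]]] Hlt.
rewrite /= {2}/step Hq /= Hi /read_input Hlt /=.
rewrite /step /= /Inv1 /= Hid Hidp set_ruler addr_ruler.
by repeat split; try (move=> j); rewrite ?tnth_mktuple /= ?Hw ?Hwp ?set_ruler.
Qed.

Lemma phase1 x a : (forall a', a' < a -> 2 ^ a' < size x) ->
  Inv1 a (iter (2 * a + 2) (step M x) (init M [::])).
Proof.
elim: a => [|a IH] H; first exact: phase1_start.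
have -> : 2 * a.+1 + 2 = 2 + (2 * a + 2) by lia.
rewrite iterD; apply: phase1_step; last exact: H.
by apply: IH => a' Ha'; apply: H; lia.
Qed.

Fixpoint par_upto (g : nat -> bool) s := if s is s'.+1 then par_upto g s' (+) g s' else false.
Definition parx x st s := par_upto (fun s' => odflt false (read_input x (st - s'))) s.

Definition pos_e a (dirs : {ffun 'I_K -> bool}) (pos : 'I_K -> nat) (j : 'I_K) :=
  if dirs j then a.+1 - pos j else pos j.
Definition es a dirs pos := [seq pos_e a dirs pos j | j <- enum 'I_K].
Fixpoint Phi (w : nat) (l : seq nat) := if l is e :: l' then e + w * Phi w l' else 0.
Fixpoint dec (W : nat) (l : seq nat) :=
  if l is e :: l' then (if e == 0 then W :: dec W l' else e.-1 :: l') else [::].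

Lemma size_dec W l : size (dec W l) = size l.
Proof. by elim: l => //= e l IH; case: ifP => //= _; rewrite IH. Qed.

Lemma nth_dec W l i : i < size l -> nth 0 (dec W l) i =
  (if i < find (fun e => e != 0) l then W
   else if i == find (fun e => e != 0) l then (nth 0 l i).-1 else nth 0 l i).
Proof.
elim: l i => [|e l IH] i //= Hi.
case: eqP => He /=.
  case: i Hi => [|i] Hi //=.
  by rewrite IH.
by case: i Hi.
Qed.

Lemma Phi_pos W l : has (fun e => e != 0) l -> 0 < Phi W.+1 l.
Proof.
elim: l => //= e l IH /orP [He|Hl]; first by lia.
have := IH Hl; nia.
Qed.

Lemma Phi_dec W l : has (fun e => e != 0) l -> Phi W.+1 (dec W l) = (Phi W.+1 l).-1.
Proof.
elim: l => //= e l IH /orP [He|Hl].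
  by rewrite (negbTE He) /=; lia.
case: eqP => He /=; last by lia.
rewrite IH // He.
have := @Phi_pos W l Hl; set P := Phi W.+1 l; nia.
Qed.

Lemma Phi_eq0 W l : (Phi W.+1 l == 0) = ~~ has (fun e => e != 0) l.
Proof.
elim: l => //= e l IH.
by rewrite negb_or -IH negbK addn_eq0 muln_eq0.
Qed.

Lemma Phi_nseq W k : Phi W.+1 (nseq k W) = W.+1 ^ k - 1.
Proof.
elim: k => //= k ->.
rewrite expnS.
have : 0 < W.+1 ^ k by rewrite expn_gt0.
set P := W.+1 ^ k; nia.
Qed.

Lemma nth_ruler a p : nth None (ruler a) p =
  if p == 0 then Some true else if p <= a then Some false else None.
Proof. by case: p => [|p] //=; rewrite nth_nseq. Qed.

Definition Inv2 x a st s (c : config M) := exists dirs,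
  cstate c = inr (false, parx x st s, dirs) /\ ipos c = st - s /\
  (forall j p, nth None (widx c j) p = nth None (ruler a) p) /\
  (forall j, widxpos c j <= a.+1) /\
  Phi a.+2 (es a dirs (widxpos c)) = a.+2 ^ K - 1 - s.

Lemma map_cst (T1 T2 : Type) (v : T2) (s : seq T1) : [seq v | _ <- s] = nseq (size s) v.
Proof. by elim: s => //= _ s ->. Qed.

Lemma es_ext a dirs p1 p2 : p1 =1 p2 -> es a dirs p1 = es a dirs p2.
Proof. by move=> H; apply: eq_map => j; rewrite /pos_e H. Qed.

Lemma phase1_end x a c : Inv1 a c -> size x <= 2 ^ a -> Inv2 x a (2 ^ a) 0 (step M x c).
Proof.
case=> Hq [Hi [Hid [Hidp [Hw Hwp]]]] Hle.
have Hr : read_input x (2 ^ a) = None by rewrite /read_input ltnNge Hle.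
rewrite /step Hq /= Hi Hr /=.
exists [ffun _ => false]; split; first by [].
split; first by rewrite subn0.
split.
  move=> j p; rewrite /= !tnth_mktuple nth_set_nth /= Hw Hwp.
  by case: eqP => // ->; rewrite nth_ruler /=; case: ifP => //; lia.
split; first by move=> j; rewrite /= tnth_mktuple /= Hwp.
rewrite subn0 (@es_ext _ _ _ (fun _ => a.+1)); last by move=> j; rewrite /= tnth_mktuple /= Hwp.
rewrite /es /pos_e.
have -> : [seq (if [ffun=> false] j then a.+1 - a.+1 else a.+1) | j <- enum 'I_K] = nseq K a.+1.
  by rewrite (@eq_map _ _ _ (fun _ => a.+1)) ?map_cst ?size_enum_ord // => j; rewrite ffunE.
by rewrite Phi_nseq.
Qed.

Lemma pos_update a (d : bool) (p : nat) (lt eq : bool) : p <= a.+1 ->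
  (lt -> (if d then a.+1 - p else p) = 0) -> (eq -> (if d then a.+1 - p else p) != 0) ->
  ~~ (lt && eq) ->
  (if (if lt then ~~ d else d) then
     a.+1 - mv (if eq then (if d then MoveR else MoveL) else MoveS) p
   else mv (if eq then (if d then MoveR else MoveL) else MoveS) p)
  = (if lt then a.+1 else if eq then (if d then a.+1 - p else p).-1
     else (if d then a.+1 - p else p)) /\
  mv (if eq then (if d then MoveR else MoveL) else MoveS) p <= a.+1.
Proof.
case: lt; case: eq; case: d => //= Hp H1 H2 _.
- have := H1 erefl; lia.
- have := H1 erefl; lia.
- have := H2 erefl; lia.
- have := H2 erefl; lia.
Qed.

Lemma phase2 x a st s c : Inv2 x a st s c -> s <= a.+2 ^ K - 1 ->
  exists dirs', cstate (step M x c) = inr (s == a.+2 ^ K - 1, parx x st s.+1, dirs') /\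
  (s < a.+2 ^ K - 1 -> Inv2 x a st s.+1 (step M x c)).
Proof.
move=> [dirs [Hq [Hi [Hw [Hp HPhi]]]]] Hs.
set wis := [tuple nth None (widx c j) (widxpos c j) | j < K].
have Hz : forall j, zK K dirs wis j = (pos_e a dirs (widxpos c) j == 0).
  move=> j; rewrite /zK /pos_e tnth_mktuple Hw nth_ruler.
  have := Hp j; case: (dirs j); case: (widxpos c j) => [|p] //= Hpj.
    case: ltnP => H; first by apply/esym/negbTE/eqP; lia.
    by rewrite eqxx; apply/esym/eqP; lia.
  by case: ifP.
set l := es a dirs (widxpos c).
have Hjs : jsK K dirs wis = find (fun e => e != 0) l.
  rewrite /jsK /l /es [in RHS]find_map; apply: eq_find => j; by rewrite /preim /= Hz.
have Hsl : size l = K by rewrite size_map size_enum_ord.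
have HjsK : (jsK K dirs wis == K) = (s == a.+2 ^ K - 1).
  rewrite Hjs -{1}Hsl.
  have -> : (find (fun e => e != 0) l == size l) = ~~ has (fun e => e != 0) l.
    rewrite has_find; by rewrite ltn_neqAle find_size andbT negbK.
  rewrite -(Phi_eq0 a.+1) HPhi; apply/eqP/eqP; lia.
rewrite /step Hq /= -/wis.
eexists; split.
  by rewrite HjsK Hi.
move=> Hlt.
have Hhas : has (fun e => e != 0) l by apply/negPn; rewrite -(Phi_eq0 a.+1) HPhi; apply/eqP; lia.
set js := jsK K dirs wis.
have HjsK' : js < K by rewrite /js Hjs -Hsl -has_find.
have Hupd : forall j : 'I_K,
  (if [ffun j0 : 'I_K => if j0 < js then ~~ dirs j0 else dirs j0] j then
     a.+1 - mv (if j == js :> nat then (if dirs j then MoveR else MoveL) else MoveS) (widxpos c j)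
   else mv (if j == js :> nat then (if dirs j then MoveR else MoveL) else MoveS) (widxpos c j))
  = (if j < js then a.+1 else if j == js :> nat then (pos_e a dirs (widxpos c) j).-1
     else pos_e a dirs (widxpos c) j) /\
  mv (if j == js :> nat then (if dirs j then MoveR else MoveL) else MoveS) (widxpos c j) <= a.+1.
  move=> j; rewrite ffunE; apply: pos_update => //.
  - rewrite /js Hjs => Hj; apply/eqP; have := before_find 0 Hj.
    rewrite /l /es (nth_map j) ?size_enum_ord // nth_ord_enum.
    by move/negbFE.
  - move=> /eqP Hj; have := nth_find 0 Hhas.
    by rewrite -Hjs -/js -Hj /l /es (nth_map j) ?size_enum_ord // nth_ord_enum.
  - by apply/negP => /andP [H1 /eqP H2]; move: H1; rewrite H2 ltnn.
exists [ffun j0 : 'I_K => if j0 < js then ~~ dirs j0 else dirs j0].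
split; first by rewrite /= /js HjsK (ltn_eqF Hlt) Hi.
split; first by rewrite /= Hi subnS.
split.
  by move=> j p; rewrite /= !tnth_mktuple nth_set_nth /=; case: eqP => [->|_]; rewrite Hw.
split.
  by move=> j; rewrite /= tnth_mktuple /=; case: (Hupd j).
rewrite (@es_ext a _ _ (fun j : 'I_K => mv (if j == js :> nat then (if dirs j then MoveR else MoveL) else MoveS) (widxpos c j))); last first.
  by move=> j; rewrite /= tnth_mktuple.
have -> : es a [ffun j0 : 'I_K => if j0 < js then ~~ dirs j0 else dirs j0]
  (fun j : 'I_K => mv (if j == js :> nat then (if dirs j then MoveR else MoveL) else MoveS) (widxpos c j))
  = dec a.+1 l.
  apply: (@eq_from_nth _ 0); first by rewrite size_dec /l /es !size_map.
  rewrite size_map size_enum_ord => i Hik.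
  pose j := Ordinal Hik.
  rewrite -[i]/(val j) nth_dec ?Hsl // -Hjs -/js.
  rewrite /es (nth_map j) ?size_enum_ord // nth_ord_enum.
  rewrite /l /es (nth_map j) ?size_enum_ord // nth_ord_enum.
  by rewrite /pos_e (Hupd j).1.
rewrite Phi_dec // HPhi; lia.
Qed.

Lemma phase2_iter x a st s c : Inv2 x a st 0 c -> s <= a.+2 ^ K - 1 ->
  Inv2 x a st s (iter s (step M x) c).
Proof.
move=> H0; elim: s => [|s IH] Hs //=.
have H1 := IH (ltnW Hs).
by have [_ [_ H2]] := phase2 _ _ _ _ _ H1 (ltnW Hs); apply: H2.
Qed.

Lemma final x a : (forall a', a' < a -> 2 ^ a' < size x) -> size x <= 2 ^ a ->
  exists dirs, cstate (iter (2 * a + 3 + a.+2 ^ K) (step M x) (init M [::])) =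
    inr (true, parx x (2 ^ a) (a.+2 ^ K), dirs).
Proof.
move=> H1 H2.
have Hpos : 0 < a.+2 ^ K by rewrite expn_gt0.
have -> : 2 * a + 3 + a.+2 ^ K = 1 + ((a.+2 ^ K - 1) + (1 + (2 * a + 2))) by lia.
rewrite (iterD 1 ((a.+2 ^ K - 1) + (1 + (2 * a + 2)))) (iterD (a.+2 ^ K - 1) (1 + (2 * a + 2))) (iterD 1 (2 * a + 2)).
have I1 := phase1 _ _ H1.
have I2 := phase1_end _ _ _ I1 H2.
have I3 := phase2_iter _ _ _ _ _ I2 (leqnn (a.+2 ^ K - 1)).
have [dirs [Hq _]] := phase2 _ _ _ _ _ I3 (leqnn _).
exists dirs; rewrite /= Hq eqxx.
by have -> : (a.+2 ^ K - 1).+1 = a.+2 ^ K by lia.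
Qed.

End P1.

Definition sensitive (P' : problem) (K : nat) := forall b x j,
  size x = 2 ^ b -> 0 < j < 2 ^ b -> 2 ^ b - j <= (b.+2) ^ K - 1 ->
  (P' (flip x j) <-> ~ P' x).

Definition cK K := 6 + 3 ^ K.
Definition PK K : problem := fun x =>
  accepting (MK K) (cstate (iter (cK K * logp (size x) ^ K) (step (MK K) x) (init (MK K) [::]))).

Lemma time_bound {K a l} : 0 < K -> 0 < l -> a <= l -> 2 * a + 3 + a.+2 ^ K <= cK K * l ^ K.
Proof.
move=> HK Hl Hal.
have H1 : a.+2 ^ K <= 3 ^ K * l ^ K.
  rewrite -expnMn; apply: expn_mono; lia.
have H2 : l <= l ^ K.
  case: K HK {H1} => // K _; rewrite expnS; have : 0 < l ^ K by rewrite expn_gt0 Hl.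
  set L := l ^ K; nia.
rewrite /cK; move: H1 H2; set P := l ^ K; set T := 3 ^ K; nia.
Qed.

Lemma PK_val {K x a} : 0 < K -> (forall a', a' < a -> 2 ^ a' < size x) -> size x <= 2 ^ a ->
  halting (MK K) (cstate (iter (cK K * logp (size x) ^ K) (step (MK K) x) (init (MK K) [::]))) /\
  PK K x = parx x (2 ^ a) (a.+2 ^ K).
Proof.
move=> HK H1 H2.
have [dirs Hq] := final K x a H1 H2.
have Hal : a <= logp (size x).
  case: a H1 H2 {Hq} => [|a] H1 H2 //.
  have H3 := H1 a (ltnSn a).
  have Hn : 0 < size x by apply: leq_ltn_trans H3.
  have [_ H4] := andP (trunc_log_bounds (isT : 1 < 2) Hn).
  have H5 := ltn_trans H3 H4.
  by rewrite ltn_exp2l in H5.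
have Ht := time_bound HK (isT : 0 < logp (size x)) Hal.
rewrite /PK -(subnK Ht) iterD halted_fix; last by rewrite Hq.
by rewrite Hq.
Qed.

Lemma PPL_PK K : 0 < K -> PPLi K (PK K).
Proof.
move=> HK; exists (MK K), (cK K) => x.
pose Pa := fun a => size x <= 2 ^ a.
have Hex : exists a, Pa a by exists (size x); rewrite /Pa ltnW // ltn_expl.
case: (ex_minnP Hex) => a Ha Hmin.
have H1 : forall a', a' < a -> 2 ^ a' < size x.
  by move=> a' Ha'; rewrite ltnNge; apply/negP => H; have := Hmin a' H; lia.
have [Hh _] := PK_val HK H1 Ha.
by split.
Qed.

Lemma par_ext g g' N : (forall s, s < N -> g' s = g s) -> par_upto g' N = par_upto g N.
Proof. by elim: N => //= N IH H; rewrite IH ?H // => s Hs; apply: H; lia. Qed.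

Lemma par_flip g g' N s0 : s0 < N -> g' s0 = ~~ g s0 ->
  (forall s, s < N -> s != s0 -> g' s = g s) -> par_upto g' N = ~~ par_upto g N.
Proof.
elim: N => //= N IH Hs0 Hg H.
case: (eqVneq s0 N) => [E|E].
  rewrite -E Hg (par_ext g) ?addbN // => s Hs; apply: H; lia.
rewrite IH //; last by move=> s Hs Hne; apply: H => //; lia.
  by rewrite H ?addNb //; rewrite eq_sym.
lia.
Qed.

Lemma sens_PK K : 0 < K -> sensitive (PK K) K.
Proof.
move=> HK b x j Hx Hj Hb.
have Hjx : j < size x by rewrite Hx; lia.
have Hy : size (flip x j) = 2 ^ b by rewrite size_flip.
have H1 : forall y, size y = 2 ^ b -> PK K y = parx y (2 ^ b) (b.+2 ^ K).
  move=> y Hsy.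
  have Ha' : forall a', a' < b -> 2 ^ a' < size y by move=> a' Ha'; rewrite Hsy ltn_exp2l.
  have Hle : size y <= 2 ^ b by rewrite Hsy.
  by have [_ ->] := PK_val HK Ha' Hle.
rewrite !H1 //.
have -> : parx (flip x j) (2 ^ b) (b.+2 ^ K) = ~~ parx x (2 ^ b) (b.+2 ^ K).
  apply: (@par_flip _ _ _ (2 ^ b - j)).
  - have : 0 < b.+2 ^ K by rewrite expn_gt0.
    lia.
  - have -> : 2 ^ b - (2 ^ b - j) = j by lia.
    rewrite /read_input Hy -Hx Hjx /flip nth_set_nth /= eqxx.
    by [].
  - move=> s Hs Hne; rewrite read_flip //.
    apply/eqP; lia.
by case: (parx x _ _); split.
Qed.

Lemma minimizer (f : seq bool -> seq bool) n :
  exists x, size x = n /\ forall y, size y = n -> size (f x) <= size (f y).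
Proof.
pose t0 : n.-tuple bool := nseq_tuple n false.
case: (@arg_minnP _ t0 predT (fun t : n.-tuple bool => size (f t)) isT) => t _ Hmin.
exists t; split; first by rewrite size_tuple.
move=> y Hy.
have Hy' : size y == n by rewrite Hy.
exact: (Hmin (Tuple Hy')).
Qed.

Lemma logp_bound L cf d b e : L <= cf * (2 ^ b) ^ d + cf -> cf.+1 <= 2 ^ e ->
  logp L <= (d + e + 1) * b.+1.
Proof.
move=> HL He.
have H2 : L < 2 ^ (b * d + e + 1).
  rewrite -expnM in HL; rewrite !expnD expn1.
  apply: (leq_ltn_trans HL).
  have : 1 <= 2 ^ (b * d) by rewrite expn_gt0.
  nia.
rewrite /logp.
have H3 : trunc_log 2 L < b * d + e + 1.
  case: (posnP L) => [->|HL0]; first by rewrite trunc_log0; lia.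
  have [H4 _] := andP (trunc_log_bounds (isT : 1 < 2) HL0).
  have H5 := leq_ltn_trans H4 H2.
  by rewrite ltn_exp2l in H5.
nia.
Qed.

Lemma size_flatten_const (S : Type) (s : seq nat) (g : nat -> seq S) t :
  (forall p, size (g p) = t) -> size (flatten [seq g p | p <- s]) = t * size s.
Proof.
move=> H; elim: s => [|p s IH] /=; first by rewrite muln0.
by rewrite size_cat IH H mulnS.
Qed.


Lemma core P P' i : PPLi i P -> sensitive P' (i + 2) -> DLOGTIME_reducible P' P -> False.
Proof.
move=> [M0 [c0 HM0]] Sens [f [Hred [[cf [d Hsz]] [Mbit [Mlen [c HM]]]]]].
set e := cf.+1.
have He : cf.+1 <= 2 ^ e by apply: ltnW; apply: ltn_expl.
set A := d + e + 1.
set C := c * (c0 * A ^ i + 1).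
have [u [HCu Hu]] := exp_dom (i.+1) (2 * C + 2).
have u_gt0 : 0 < u by lia.
set b := u.-1.
have Hub : u = b.+1 by rewrite /b prednK.
set n := 2 ^ b.
have [x [Hx Hmin]] := minimizer f n.
set L := size (f x).
set t := c * logp n.
have Ht : t = c * u by rewrite /t /logp /n trunc_expnK // Hub.
set T := c0 * logp L ^ i.
have HLA : logp L <= A * u.
  rewrite Hub; apply: logp_bound He.
  by rewrite /L -/n -Hx; apply: Hsz.
have HT : T <= c0 * A ^ i * u ^ i.
  by rewrite /T -mulnA -expnMn leq_mul2l expn_mono ?orbT.
set B := reads Mlen x (map Some (bin L)) t ++
   flatten [seq reads Mbit x (map Some (bin p)) t | p <- reads M0 (f x) [::] T].
have HB : size B = t + t * T.
  rewrite size_cat size_reads (@size_flatten_const _ _ _ t); first by rewrite size_reads.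
  by move=> p; rewrite size_reads.
set m := C * u ^ i.+1 + 1.
have Hn2 : 2 ^ u = 2 * n by rewrite Hub expnS.
have HU : 1 <= u ^ i by rewrite expn_gt0 u_gt0.
have HBm : size B < m.
  rewrite HB Ht /m /C expnS.
  move: HT HU; set U := u ^ i; set Ai := A ^ i; nia.
have Hmn : m < n.
  move: Hu; rewrite Hn2 /m expnS; move: HU; set U := u ^ i; nia.
have [j [Hj HjB]] := avoid B (n - m) m HBm.
have Hjn : j < size x by rewrite Hx; lia.
set y := flip x j.
have Hy : size y = n by rewrite size_flip // Hx.
have HPxy : P' y <-> ~ P' x.
  apply: (Sens b x j Hx); first by rewrite -/n; lia.
  rewrite -/n -Hub addn2.
  have H1 : u ^ i.+2 < (u.+1) ^ i.+2 by rewrite ltn_exp2r.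
  have H2 : m <= u ^ i.+2.
    rewrite /m !expnS; move: HU; set U := u ^ i => HU.
    have : C.+1 <= u by lia.
    move=> H3; have H4 : C.+1 * U <= u * U by rewrite leq_mul2r H3 orbT.
    nia.
  lia.
have Hjreads : forall M w p, p \in reads M x w t -> p \in B -> read_input x p = read_input y p.
  move=> M w p _ HpB; apply: esym; apply: read_flip => //.
  by apply/negP => /eqP Hpj; move: HjB; rewrite -Hpj HpB.
have HLy : size (f y) = L.
  have HL1 : L <= size (f y) by apply: Hmin.
  have [_ Hx1] := (HM x L (leqnn _)).2.
  have [_ Hy1] := (HM y L HL1).2.
  move: Hx1 Hy1; rewrite Hx Hy -/t.
  rewrite (sim Mlen x y); last first.
    by move=> p Hp; apply: (Hjreads Mlen (map Some (bin L))) => //; rewrite mem_cat Hp.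
  move=> H1 H2.
  apply/eqP; rewrite eqn_leq HL1 andbT leqNgt; apply/negP => Hlt.
  by have := H1.1 (H2.2 Hlt); rewrite -/L ltnn.
have Hreads0 : forall p, p \in reads M0 (f x) [::] T -> read_input (f x) p = read_input (f y) p.
  move=> p Hp; rewrite /read_input HLy -/L.
  case: (ltnP p L) => HpL //.
  have HpL' : p <= size (f y) by rewrite HLy ltnW.
  have [_ Hx1] := (HM x p (ltnW HpL)).1.
  have [_ Hy1] := (HM y p HpL').1.
  move: Hx1 Hy1; rewrite Hx Hy -/t HLy.
  rewrite (sim Mbit x y); last first.
    move=> q Hq; apply: (Hjreads Mbit (map Some (bin p))) => //; rewrite mem_cat; apply/orP; right.
    by apply/flatten_mapP; exists p.
  move=> H1 H2.
  have E : nth false (f x) p = nth false (f y) p.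
    case E1 : (nth false (f x) p); case E2 : (nth false (f y) p) => //.
      by have := (H2.1 (H1.2 (conj HpL E1))).2; rewrite E2.
    by have := (H1.1 (H2.2 (conj HpL E2))).2; rewrite E1.
  by rewrite E.
have HP : P (f x) <-> P (f y).
  have [_ Hx1] := HM0 (f x).
  have [_ Hy1] := HM0 (f y).
  move: Hx1 Hy1; rewrite HLy -/L -/T (sim M0 (f x) (f y)) //.
  by move=> H1 H2; split => H; [apply/H2/H1 | apply/H1/H2].
have := Hred x; have := Hred y.
move: HPxy HP; clear; tauto.
Qed.

Theorem mainTheorem11 :
  ~ (exists P : problem, PPL P /\ forall P' : problem, PPL P' -> DLOGTIME_reducible P' P).
Proof.
case=> P [[i [Hi HP]] Hall].
have HK : 0 < i + 2 by rewrite addn2.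
apply: (@core P (PK (i + 2)) i HP (sens_PK (i + 2) HK)).
apply: Hall; exists (i + 2); split; first by rewrite addn2.
exact: PPL_PK.
Qed.
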